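(* Let $\mathbf{u}$ be fixed by a primitive substitution $\varphi_w$, $w\in\{a,b,\alpha,\beta\}^*$. (1) If $w\in\{a,\beta\}^*$, then $\sigma(\mathbf{u})$ is a standard Sturmian word which is fixed by the substitution $\varphi_{H(w)}$. (2) If $w\in\{b,\alpha\}^*$, then $\sigma(\mathbf{u})$ is a standard Sturmian word which is fixed by the substitution $\varphi_{F(w)}$. (3) If $w\in\{a,\alpha\}^*$ and $\mathbf{u}$ has prefix $1$, then $\sigma(\mathbf{u})$ is fixed by the substitution $\varphi_{H(w)}$. (4) If $w\in\{a,\alpha\}^*$ and $\mathbf{u}$ has prefix $0$, then $\sigma(\mathbf{u})$ is fixed by the substitution $\varphi_{F(w)}$.
   Context: Morphisms on $\{0,1\}^*$: $\varphi_a: 0\mapsto 0, 1 \mapsto 10$; $\varphi_b: 0 \mapsto 0, 1\mapsto 01$; $\varphi_\alpha: 0\mapsto 01, 1\mapsto 1$; $\varphi_\beta: 0\mapsto 10, 1 \mapsto 1$; for $w=w_0\cdots w_{m-1}$, $\varphi_w = \varphi_{w_0}\circ\cdots\circ\varphi_{w_{m-1}}$. $H, F$ are the monoid morphisms on $\{a,b,\alpha,\beta\}^*$ given by $H(a)=H(b)=b$, $H(\alpha)=\alpha$, $H(\beta)=\beta$, and $F(a)=a$, $F(b)=b$, $F(\alpha)=F(\beta)=\beta$. $\sigma$ is the shift $\sigma(u_0u_1u_2\cdots)=u_1u_2\cdots$. A morphism is primitive if some power maps every letter to a word containing every letter; a substitution is a morphism $\psi$ with a letter $c$, $\psi(c)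 = cx$, $x$ nonempty, $|\psi^n(c)|\to\infty$. A standard Sturmian word is a Sturmian word $\mathbf{s}$ over $\{0,1\}$ such that both $0\mathbf{s}$ and $1\mathbf{s}$ are Sturmian (equivalently, the lower two interval exchange coding with parameters $\ell_0,\ell_1,\rho=\ell_1$: $T$ on $[0,\ell_0+\ell_1)$, $T(x)=x+\ell_1$ on $[0,\ell_0)$ coded $0$, $T(x)=x-\ell_0$ on $[\ell_0,\ell_0+\ell_1)$ coded $1$, orbit of $\rho$). Sturmian words are infinite binary words with exactly $n+1$ factors of length $n$ for each $n$. *)

(* Defs.v *)
(* Letters of {0,1}: false = 0, true = 1. *)
From mathcomp Require Import all_boot.
Set Implicit Arguments. Unset Strict Implicit. Unset Printing Implicit Defensive.

Inductive gen := Ga | Gb | Galpha | Gbeta.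

(* Finite words over {0,1}: seq bool.  Infinite words: nat -> bool. *)
Definition morph := bool -> seq bool.

Definition mapw (f : morph) (s : seq bool) : seq bool := flatten (map f s).

Definition phi (g : gen) : morph :=
  match g with
  | Ga => fun c => if c then [:: true; false] else [:: false]
  | Gb => fun c => if c then [:: false; true] else [:: false]
  | Galpha => fun c => if c then [:: true] else [:: false; true]
  | Gbeta => fun c => if c then [:: true] else [:: true; false]
  end.

Fixpoint phiw (w : seq gen) : morph :=
  match w with
  | [::] => fun c => [:: c]
  | g :: w' => fun c => mapw (phi g) (phiw w' c)
  end.

Definition Hg (g : gen) : gen :=
  match g with Ga | Gb => Gb | Galpha => Galpha | Gbeta => Gbeta end.
Definition Fg (g : gen) : gen :=
  match g with Ga => Ga | Gb => Gb | Galpha | Gbeta => Gbeta end.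
Definition Hw (w : seq gen) := map Hg w.
Definition Fw (w : seq gen) := map Fg w.

Definition in_a_beta (g : gen) := match g with Ga | Gbeta => true | _ => false end.
Definition in_b_alpha (g : gen) := match g with Gb | Galpha => true | _ => false end.
Definition in_a_alpha (g : gen) := match g with Ga | Galpha => true | _ => false end.

Definition mpow (f : morph) (k : nat) : morph :=
  iter k (fun g c => mapw f (g c)) (fun c => [:: c]).

Definition primitive (f : morph) : Prop :=
  exists k, forall c d : bool, d \in mpow f k c.

Definition substitution (f : morph) : Prop :=
  exists (c : bool) (x : seq bool),
    f c = c :: x /\ x != [::] /\
    (forall M, exists N, forall n, N <= n -> M <= size (mpow f n c)).

Definition pref (u : nat -> bool) (n : nat) : seq bool := mkseq u n.

(* Image of an infinite word under a NON-ERASING morphism f: its n-th letter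
   is the n-th letter of f(u_0 ... u_n) (which has length >= n+1). *)
Definition img (f : morph) (u : nat -> bool) : nat -> bool :=
  fun n => nth false (mapw f (pref u n.+1)) n.

Definition fixed_by (f : morph) (u : nat -> bool) : Prop :=
  forall n, img f u n = u n.

Definition shift (u : nat -> bool) : nat -> bool := fun n => u n.+1.

Definition consw (b : bool) (u : nat -> bool) : nat -> bool :=
  fun n => if n is n'.+1 then u n' else b.

Definition factor (u : nat -> bool) (n : nat) (x : seq bool) : Prop :=
  exists i, x = mkseq (fun j => u (i + j)) n.

Definition sturmian (u : nat -> bool) : Prop :=
  forall n, exists l : seq (seq bool),
    uniq l /\ size l = n.+1 /\ (forall x, x \in l <-> factor u n x).

Definition standard_sturmian (s : nat -> bool) : Prop :=
  sturmian s /\ sturmian (consw false s) /\ sturmian (consw true s).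

(* Main.v *)
Require Import Defs.
From mathcomp Require Import all_boot.
From Stdlib Require Import FunctionalExtensionality Setoid.
Set Implicit Arguments. Unset Strict Implicit. Unset Printing Implicit Defensive.

Definition shiftn (k : nat) (x : nat -> bool) : nat -> bool := fun n => x (k + n).
Definition pre (v : seq bool) (x : nat -> bool) := pref x (size v) = v.
Definition fac (x : nat -> bool) (v : seq bool) := exists i, pre v (shiftn i x).
Definition LS x v := fac x (false :: v) /\ fac x (true :: v).
Definition isimg (f : morph) t x := forall n, pre (mapw f (pref t n)) x.
Definition nonerasing (f : morph) := forall c, 0 < size (f c).

Lemma shiftn0 x : shiftn 0 x = x.
Proof. by apply: functional_extensionality => n. Qed.

Lemma shiftnS i j x : shiftn i (shiftn j x) = shiftn (j + i) x.
Proof. by apply: functional_extensionality => n; rewrite /shiftn addnA. Qed.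

Lemma size_pref x n : size (pref x n) = n.
Proof. exact: size_mkseq. Qed.

Lemma pref_add t m n : pref t (m + n) = pref t m ++ pref (shiftn m t) n.
Proof.
rewrite /pref /mkseq iotaD map_cat; congr (_ ++ _).
by rewrite add0n -{1}(addn0 m) iotaDl -map_comp.
Qed.

Lemma pref_S t n : pref t n.+1 = t 0 :: pref (shiftn 1 t) n.
Proof. by rewrite -add1n pref_add. Qed.

Lemma pre_cat a b x : pre (a ++ b) x <-> pre a x /\ pre b (shiftn (size a) x).
Proof.
rewrite /pre size_cat pref_add; split.
  by move/eqP; rewrite eqseq_cat ?size_pref // => /andP [/eqP -> /eqP ->].
by move=> [-> ->].
Qed.

Lemma pre_catl a b x : pre (a ++ b) x -> pre a x.
Proof. by case/pre_cat. Qed.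

Lemma pre_cons c v x : pre (c :: v) x <-> x 0 = c /\ pre v (shiftn 1 x).
Proof.
rewrite /pre /= pref_S; split; first by move=> [-> ->].
by move=> [-> ->].
Qed.

Lemma pre_nil x : pre [::] x.
Proof. by []. Qed.

Lemma pre_nth v x : pre v x -> forall k, k < size v -> x k = nth false v k.
Proof. by move=> H k lk; rewrite -H nth_mkseq. Qed.

Lemma pre_pref x n : pre (pref x n) x.
Proof. by rewrite /pre size_pref. Qed.

Lemma mapw_cat f a b : mapw f (a ++ b) = mapw f a ++ mapw f b.
Proof. by rewrite /mapw map_cat flatten_cat. Qed.

Lemma mapw_cons f c p : mapw f (c :: p) = f c ++ mapw f p.
Proof. by []. Qed.

Lemma mapw_comp f g p : mapw f (mapw g p) = mapw (fun c => mapw f (g c)) p.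
Proof. by elim: p => // c p IH; rewrite !mapw_cons mapw_cat IH. Qed.

Lemma mapw_phiw_cons g L p :
  mapw (phiw (g :: L)) p = mapw (phi g) (mapw (phiw L) p).
Proof. by rewrite mapw_comp. Qed.

Lemma mapw_nil f : mapw f [::] = [::].
Proof. by []. Qed.

Lemma mapw_id p : mapw (phiw [::]) p = p.
Proof. by elim: p => // c p IH; rewrite mapw_cons IH. Qed.

Lemma size_mapw f p : nonerasing f -> size p <= size (mapw f p).
Proof.
move=> ne; elim: p => //= c p IH; rewrite size_cat.
have := ne c; case: (f c) => //= _ s _.
by rewrite addSn ltnS; apply: leq_trans IH (leq_addl _ _).
Qed.

Lemma ne_phi g : nonerasing (phi g).
Proof. by case: g => c; case: c. Qed.

Lemma ne_phiw L : nonerasing (phiw L).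
Proof.
elim: L => // g L IH c /=.
by apply: leq_trans (IH c) (size_mapw _ (ne_phi g)).
Qed.


Lemma isimg_shift f t x k : isimg f t x ->
  isimg f (shiftn k t) (shiftn (size (mapw f (pref t k))) x).
Proof. by move=> H n; have := H (k + n); rewrite pref_add mapw_cat => /pre_cat []. Qed.

Lemma isimg_head f t x : isimg f t x -> pre (f (t 0)) x.
Proof. by move=> H; have := H 1; rewrite pref_S /= mapw_cons mapw_nil cats0. Qed.

Lemma mapw_pref_ext f t m M : m <= M -> exists r, mapw f (pref t M) = mapw f (pref t m) ++ r.
Proof.
move=> le; exists (mapw f (pref (shiftn m t) (M - m))).
by rewrite -mapw_cat -pref_add subnKC.
Qed.

Lemma img_isimg f t : nonerasing f -> isimg f t (img f t).
Proof.
move=> ne n; rewrite /pre; apply: (@eq_from_nth _ false); first by rewrite size_pref.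
move=> k; rewrite size_pref => lk; rewrite nth_mkseq // /img.
have [r1 e1] := mapw_pref_ext f t (leq_maxl n k.+1).
have [r2 e2] := mapw_pref_ext f t (leq_maxr n k.+1).
have lk2 : k < size (mapw f (pref t k.+1)).
  by apply: leq_trans (size_mapw _ ne); rewrite size_pref.
have := congr1 (fun s => nth false s k) e1; rewrite e2 !nth_cat lk lk2 => <- //.
Qed.

Lemma isimg_comp f h t x z : nonerasing h ->
  isimg (fun c => mapw f (h c)) t x -> isimg h t z -> isimg f z x.
Proof.
move=> ne Hx Hz n.
have lM : n <= size (mapw h (pref t n)) by have := size_mapw (pref t n) ne; rewrite size_pref.
have := Hx n; rewrite -mapw_comp.
have := Hz n; rewrite /pre => <-.
rewrite -(subnKC lM) pref_add mapw_cat; exact: pre_catl.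
Qed.

Lemma isimg_split g L t x : isimg (phiw (g :: L)) t x ->
  exists z, isimg (phiw L) t z /\ isimg (phi g) z x.
Proof.
move=> H; exists (img (phiw L) t); split; first exact: img_isimg (ne_phiw L).
exact: isimg_comp (ne_phiw L) H (img_isimg _ (ne_phiw L)).
Qed.

Lemma isimg_id t x : isimg (phiw [::]) t x -> x = t.
Proof.
move=> H; apply: functional_extensionality => k.
have := H k.+1; rewrite mapw_id => /pre_nth e.
by rewrite e ?size_pref // nth_mkseq.
Qed.

Lemma fixed_isimg f u : nonerasing f -> fixed_by f u -> isimg f u u.
Proof.
move=> ne H; have e : img f u = u by apply: functional_extensionality.
by have := img_isimg u ne; rewrite e.
Qed.

Lemma isimg_fixed f u : nonerasing f -> isimg f u u -> fixed_by f u.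
Proof.
move=> ne H n; rewrite /img; have := H n.+1 => /pre_nth e.
rewrite e //; apply: leq_trans (size_mapw _ ne); by rewrite size_pref.
Qed.

Lemma isimg_ext f g t x : f =1 g -> isimg f t x -> isimg g t x.
Proof.
move=> e H n; have -> : mapw g (pref t n) = mapw f (pref t n) by rewrite /mapw (eq_map e).
exact: H.
Qed.


Definition phid (d : bool) : morph := fun c => if c == d then [:: d] else [:: d; c].

Lemma ne_phid d : nonerasing (phid d).
Proof. by move=> c; rewrite /phid; case: (c == d). Qed.

Lemma pre2 a b v Z : pre (a :: b :: v) Z <-> [/\ Z 0 = a, Z 1 = b & pre v (shiftn 2 Z)].
Proof.
rewrite pre_cons pre_cons shiftnS; split; first by case=> ? [].
by case=> ? ? ?; split.
Qed.

Lemma fac_cons x c v : fac x (c :: v) <-> exists i, x i = c /\ pre v (shiftn i.+1 x).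
Proof.
split.
  case=> i /pre_cons [h1 h2]; exists i; split; first by rewrite -h1 /shiftn addn0.
  by move: h2; rewrite shiftnS addn1.
case=> i [h1 h2]; exists i; apply/pre_cons; split; first by rewrite /shiftn addn0.
by rewrite shiftnS addn1.
Qed.

Lemma img_d d t x : isimg (phid d) t x -> x 0 = d.
Proof.
move/isimg_head; rewrite /phid; case: (t 0 == d).
  by case/pre_cons.
by case/pre_cons.
Qed.

Lemma pref1 t : pref t 1 = [:: t 0].
Proof. by rewrite pref_S. Qed.

Lemma unf_d d t x : isimg (phid d) t x -> t 0 = d ->
  isimg (phid d) (shiftn 1 t) (shiftn 1 x).
Proof.
move=> H e; have := isimg_shift 1 H.
by rewrite pref1 mapw_cons mapw_nil cats0 /phid e eqxx.
Qed.

Lemma unf_nd d t x : isimg (phid d) t x -> t 0 = ~~ d ->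
  x 1 = ~~ d /\ isimg (phid d) (shiftn 1 t) (shiftn 2 x).
Proof.
move=> H e; have := isimg_shift 1 H.
have e2 : phid d (t 0) = [:: d; ~~ d] by rewrite /phid e; case: d {H e}.
rewrite pref1 mapw_cons mapw_nil cats0 e2; split => //.
by have := isimg_head H; rewrite e2 => /pre2 [].
Qed.

Lemma bool_d d (b : bool) : b = d \/ b = ~~ d.
Proof. by case: b; case: d; auto. Qed.

Lemma blk1 d i t x : isimg (phid d) t x -> x i = ~~ d ->
  exists j, t j = ~~ d /\ isimg (phid d) (shiftn j.+1 t) (shiftn i.+1 x).
Proof.
elim/ltn_ind: i t x => i IH t x H xi.
have x0 := img_d H.
case: (bool_d d (t 0)) => t0.
  case: i IH xi => [|i] IH xi; first by move: xi; rewrite x0; case: (d).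
  have H1 := unf_d H t0.
  have [j [tj Hj]] := IH i (ltnSn i) _ _ H1 xi.
  by exists j.+1; split => //; move: Hj; rewrite !shiftnS !add1n.
have [x1 H2] := unf_nd H t0.
case: i IH xi => [|[|i]] IH xi.
- by move: xi; rewrite x0; case: (d).
- by exists 0.
have [j [tj Hj]] := IH i (leqW (ltnSn i)) _ _ H2 xi.
by exists j.+1; split => //; move: Hj; rewrite !shiftnS !add1n.
Qed.

Lemma blk0 d i t x : isimg (phid d) t x -> x i = d -> x i.+1 = d ->
  exists j, t j = d /\ isimg (phid d) (shiftn j.+1 t) (shiftn i.+1 x).
Proof.
elim/ltn_ind: i t x => i IH t x H xi xi1.
case: (bool_d d (t 0)) => t0.
  case: i IH xi xi1 => [|i] IH xi xi1; first by exists 0; split => //; exact: unf_d.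
  have H1 := unf_d H t0.
  have [j [tj Hj]] := IH i (ltnSn i) _ _ H1 xi xi1.
  by exists j.+1; split => //; move: Hj; rewrite !shiftnS !add1n.
have [x1 H2] := unf_nd H t0.
case: i IH xi xi1 => [|[|i]] IH xi xi1.
- by move: xi1; rewrite x1; case: (d).
- by move: xi; rewrite x1; case: (d).
have [j [tj Hj]] := IH i (leqW (ltnSn i)) _ _ H2 xi xi1.
by exists j.+1; split => //; move: Hj; rewrite !shiftnS !add1n.
Qed.


Lemma neg_neq (d : bool) : (d = ~~ d) -> False.
Proof. by case: d. Qed.

Lemma lemD d n v y y' X X' : size v <= n ->
  isimg (phid d) y X -> isimg (phid d) y' X' -> pre v X -> pre v X' -> v <> [::] ->
  exists q, [/\ size q < size v, pre q y, pre q y' &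
    forall z Z, isimg (phid d) z Z -> pre q z -> pre v Z].
Proof.
elim: n v y y' X X' => [|n IH] [|c0 v1] y y' X X' //= sz HX HX' pX pX' _.
case/pre_cons: (pX) => X0 _.
have c0d : c0 = d by rewrite -X0 (img_d HX).
case: v1 sz pX pX' => [|c1 v2] sz pX pX'.
  exists [::]; split => // z Z HZ _; apply/pre_cons; split => //.
  by rewrite (img_d HZ).
case/pre2: pX => _ X1 pX2; case/pre2: pX' => _ X'1 pX'2.
case: (bool_d d (y 0)) => y0.
  have HX1 := unf_d HX y0.
  have c1d : c1 = d by rewrite -X1; exact: (img_d HX1).
  case: (bool_d d (y' 0)) => y'0; last first.
    by have [h _] := unf_nd HX' y'0; exfalso; apply: (@neg_neq d); rewrite -h X'1.
  have HX'1 := unf_d HX' y'0.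
  have pv1 : pre (c1 :: v2) (shiftn 1 X) by apply/pre_cons; split => //; rewrite shiftnS.
  have pv1' : pre (c1 :: v2) (shiftn 1 X') by apply/pre_cons; split => //; rewrite shiftnS.
  have [q1 [s1 pq1 pq1' Hq1]] := IH (c1 :: v2) _ _ _ _ sz HX1 HX'1 pv1 pv1' (fun h => ltac:(discriminate)).
  exists (d :: q1); split => //.
  - by apply/pre_cons.
  - by apply/pre_cons.
  move=> z Z HZ /pre_cons [z0 pz].
  have := Hq1 _ _ (unf_d HZ z0) pz => /pre_cons [Z1 pZ2].
  apply/pre2; split; first by rewrite (img_d HZ) c0d.
    by rewrite -Z1.
  by move: pZ2; rewrite shiftnS.
have [x1 HX2] := unf_nd HX y0.
have c1d : c1 = ~~ d by rewrite -X1.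
case: (bool_d d (y' 0)) => y'0.
  have HX'1 := unf_d HX' y'0.
  by have := img_d HX'1; rewrite /shiftn addn0 X'1 c1d; case: (d).
have [x'1 HX'2] := unf_nd HX' y'0.
case: v2 sz pX2 pX'2 => [|c2 v3] sz pX2 pX'2.
  exists [:: ~~ d]; split => //.
  - by apply/pre_cons.
  - by apply/pre_cons.
  move=> z Z HZ /pre_cons [z0 _].
  have [Z1 _] := unf_nd HZ z0.
  by apply/pre2; split => //; rewrite ?(img_d HZ) // Z1.
have sz' : size (c2 :: v3) <= n by move: sz => /= ; rewrite ltnS; exact: ltnW.
have [q2 [s2 pq2 pq2' Hq2]] := IH (c2 :: v3) _ _ _ _ sz' HX2 HX'2 pX2 pX'2 (fun h => ltac:(discriminate)).
exists (~~ d :: q2); split => //.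
- by move: s2 => /=; rewrite !ltnS => /leqW.
- by apply/pre_cons.
- by apply/pre_cons.
move=> z Z HZ /pre_cons [z0 pz].
have [Z1 HZ2] := unf_nd HZ z0.
have := Hq2 _ _ HZ2 pz => pZ.
by apply/pre2; split => //; rewrite ?(img_d HZ) // Z1.
Qed.

Lemma LSd x v d : LS x v <-> fac x (d :: v) /\ fac x (~~ d :: v).
Proof. by case: d; rewrite /LS /=; split; case. Qed.

Lemma single_step d t x v : isimg (phid d) t x -> LS x v ->
  (forall q, size q < size v -> LS t q -> pre q t) -> pre v x.
Proof.
move=> H /(LSd _ _ d) [/fac_cons [i' [xi' pv']] /fac_cons [i [xi pv]]] IH.
case: v pv' pv IH => [|c v] pv' pv IH; first exact: pre_nil.
have [j [tj Hj]] := blk1 H xi.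
have cd : c = d.
  case/pre_cons: (pv) => e _. rewrite -e. exact: (img_d Hj).
have xi'1 : x i'.+1 = d by case/pre_cons: (pv') => e _; rewrite -cd -e /shiftn addn0.
have [j' [tj' Hj']] := blk0 H xi' xi'1.
have [q [sq pq pq' Hq]] := lemD (leqnn _) Hj Hj' pv pv' (fun h => ltac:(discriminate)).
apply: (Hq t x H); apply: IH => //.
apply/(LSd _ _ d); split; apply/fac_cons.
  by exists j'.
by exists j.
Qed.


Definition in_b_beta (g : gen) := match g with Gb | Gbeta => true | _ => false end.
Definition dof (g : gen) := if g is Gbeta then true else false.

Lemma phi_phid g : in_b_beta g -> phi g = phid (dof g).
Proof. by case: g => // _; apply: functional_extensionality; case. Qed.

Lemma chain L g t x v : all in_b_beta (g :: L) -> isimg (phiw (g :: L)) t x -> LS x v ->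
  (forall q, size q < size v -> LS t q -> pre q t) -> pre v x.
Proof.
elim: L g t x v => [|g' L IH] g t x v /andP [bg bL] H Hv IHv;
  have [z [Hz Hzx]] := isimg_split H; rewrite (phi_phid bg) in Hzx.
  by apply: (single_step Hzx Hv); rewrite (isimg_id Hz).
apply: (single_step Hzx Hv) => q sq Hq.
apply: (IH g' t z q bL Hz Hq) => q' sq' Hq'.
by apply: IHv => //; apply: ltn_trans sq.
Qed.

Lemma img_pre f t x p : isimg f t x -> pre p t -> pre (mapw f p) x.
Proof. by move=> H; rewrite /pre => <-; exact: H. Qed.

Lemma img_fac f t x p : isimg f t x -> fac t p -> fac x (mapw f p).
Proof.
move=> H [i pi]; exists (size (mapw f (pref t i))).
exact: img_pre (isimg_shift i H) pi.
Qed.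

Lemma fac_behead x c v : fac x (c :: v) -> fac x v.
Proof. by case/fac_cons => i [_ pv]; exists i.+1. Qed.

Lemma LS_img1 d t x p : isimg (phid d) t x -> LS t p -> LS x (mapw (phid d) p).
Proof.
move=> H /(LSd _ _ d) [f1 f2]; apply/(LSd _ _ d); split.
  by have := img_fac H f1; rewrite mapw_cons /phid eqxx.
have := img_fac H f2; rewrite mapw_cons /phid.
have -> : (~~ d == d) = false by case: (d).
exact: fac_behead.
Qed.

Lemma LS_img L t x p : all in_b_beta L -> isimg (phiw L) t x -> LS t p ->
  LS x (mapw (phiw L) p).
Proof.
elim: L t x p => [|g L IH] t x p.
  by move=> _ /isimg_id -> ; rewrite mapw_id.
case/andP => bg bL H Hp; have [z [Hz Hzx]] := isimg_split H.
rewrite (phi_phid bg) in Hzx; rewrite mapw_phiw_cons (phi_phid bg).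
exact: LS_img1 Hzx (IH _ _ _ bL Hz Hp).
Qed.

Lemma LS_catl x a b : LS x (a ++ b) -> LS x a.
Proof.
case=> [[i1 p1] [i2 p2]]; split.
  by exists i1; apply: (@pre_catl _ b); exact: p1.
by exists i2; apply: (@pre_catl _ b); exact: p2.
Qed.


Lemma LS_unique L g s : all in_b_beta (g :: L) -> isimg (phiw (g :: L)) s s ->
  forall v, LS s v -> pre v s.
Proof.
move=> bL H.
suff : forall n v, size v < n -> LS s v -> pre v s by move=> K v; apply: K (ltnSn _).
elim=> [|n IH] v // sv Hv.
apply: (chain bL H Hv) => q sq Hq; apply: IH => //.
exact: leq_trans sq sv.
Qed.

Lemma P_last L c : all in_b_beta L -> exists r, phiw L c = rcons r c.
Proof.
elim: L => [|g L IH]; first by exists [::].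
case/andP => bg bL; have [r e] := IH bL.
rewrite /= e -cats1 mapw_cat mapw_cons mapw_nil cats0.
have [r1 e1] : exists r1, phi g c = rcons r1 c.
  by rewrite (phi_phid bg) /phid; case: eqP => [->|_]; [exists [::] | exists [:: dof g]].
by exists (mapw (phi g) r ++ r1); rewrite e1 -!cats1 catA.
Qed.

Lemma P_head L g c : all in_b_beta (g :: L) -> exists r, phiw (g :: L) c = dof g :: r.
Proof.
case/andP => bg bL /=; have := ne_phiw L c.
case: (phiw L c) => // c' p _; rewrite mapw_cons.
have [r1 e1] : exists r1, phi g c' = dof g :: r1.
  by rewrite (phi_phid bg) /phid; case: eqP => _; eexists.
by rewrite e1; eexists.
Qed.

Lemma mem_mapw (f : morph) p c x : x \in f c -> c \in p -> x \in mapw f p.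
Proof.
move=> xf; elim: p => // a p IH; rewrite in_cons mapw_cons mem_cat.
case/orP => [/eqP <-|/IH ->]; first by rewrite xf.
by rewrite orbT.
Qed.

Lemma P_both0 L c : all in_b_beta L ->
  phiw L c = [:: c] \/ (false \in phiw L c /\ true \in phiw L c).
Proof.
elim: L => [|g L IH]; first by left.
case/andP => bg bL /=; rewrite (phi_phid bg).
case: (IH bL) => [->|[h0 h1]].
  rewrite mapw_cons mapw_nil cats0 /phid.
  by case: (c); case: (dof g) => /=; auto.
right; case: (dof g).
  by split; apply: (mem_mapw (c := false)) => //.
by split; apply: (mem_mapw (c := true)) => //.
Qed.

Lemma phi_single g c' c : phi g c' = [:: c] -> c' = c /\ phi g c = [:: c].
Proof. by case: g; case: c'; case: c. Qed.

Lemma fix_all L c : phiw L c = [:: c] -> all (fun g => phi g c == [:: c]) L.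
Proof.
elim: L => // g L IH /= e.
have ne := ne_phiw L c; have sz := size_mapw (phiw L c) (ne_phi g); rewrite e in sz.
case E: (phiw L c) e ne sz => [|c' [|c'' p]] //= e _ _.
move: e; rewrite mapw_cons mapw_nil cats0 => /phi_single [ec ->].
by rewrite eqxx /=; apply: IH; rewrite E ec.
Qed.

Definition isb (g : gen) := if g is Gb then true else false.
Definition isbeta (g : gen) := if g is Gbeta then true else false.

Lemma has_all (p q : pred gen) L : has p L -> all q L -> exists g, p g /\ q g.
Proof.
elim: L => //= g L IH /orP [pg|hp] /andP [qg qL]; first by exists g.
exact: IH.
Qed.

Lemma P_both L (c c' : bool) : all in_b_beta L -> has isb L -> has isbeta L -> c' \in phiw L c.
Proof.
move=> bL hb hbeta; case: (P_both0 c bL) => [e|[h0 h1]]; last by case: c'.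
have A := fix_all e.
case: c e A => e A.
  by have [g [pg qg]] := has_all hb A; case: g pg qg.
by have [g [pg qg]] := has_all hbeta A; case: g pg qg.
Qed.

Lemma size2 (p : seq bool) : false \in p -> true \in p -> 1 < size p.
Proof. by case: p => [|a [|b p]] //; rewrite !inE; case: a. Qed.

Lemma LS_pref L g s : all in_b_beta (g :: L) -> has isb (g :: L) -> has isbeta (g :: L) ->
  isimg (phiw (g :: L)) s s -> forall n, LS s (pref s n).
Proof.
move=> bL hb hbeta H.
set psi := phiw (g :: L).
have s0 : s 0 = dof g.
  have [r e] := P_head (s 0) bL; have := isimg_head H; rewrite e.
  by case/pre_cons.
have sz2 : forall c, 1 < size (psi c) by move=> c; apply: size2; apply: P_both.
have base : forall c, fac s [:: c; s 0].
  move=> c.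
  have cin : c \in psi (s 0) by apply: P_both.
  set k := index c (psi (s 0)).
  have sk : s k = c.
    by rewrite (pre_nth (isimg_head H)) ?index_mem // nth_index.
  have := H (k + 2); rewrite pref_add mapw_cat.
  have [r e1] := P_last c bL; have [r' e2] := P_head (s (k + 1)) bL.
  have -> : pref (shiftn k s) 2 = [:: s k; s (k + 1)] by rewrite /pref /mkseq /= /shiftn addn0.
  rewrite mapw_cons mapw_cons mapw_nil cats0 sk e1 e2 -cats1.
  rewrite -(catA r) /= catA => /pre_cat [_].
  by rewrite s0 -[_ :: _ :: r']/([:: c; dof g] ++ r') => /pre_catl pc; eexists; exact: pc.
have LS0 : LS s [:: s 0] by split; apply: base.
have step : forall n, LS s (pref s n.+1).
  elim=> [|n IH]; first by rewrite pref1.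
  have := LS_img bL H IH.
  have := H n.+1; rewrite /pre => <-.
  have lM : n.+2 <= size (mapw psi (pref s n.+1)).
    rewrite pref_S mapw_cons size_cat.
    have := size_mapw (pref (shiftn 1 s) n) (ne_phiw (g :: L)); rewrite size_pref.
    by move: (sz2 (s 0)); rewrite -/psi; case: (size (psi (s 0))) => [|[|m]] // _ h; rewrite addSn addSn !ltnS (leq_trans h) // leq_addl.
  by rewrite -(subnKC lM) pref_add; apply: LS_catl.
case=> [|n]; last exact: step.
by have := step 0; rewrite pref1 -[[:: s 0]]/([::] ++ [:: s 0]); apply: LS_catl.
Qed.


Lemma fac0_pref s v : pre v (shiftn 0 s) -> v = pref s (size v).
Proof. by rewrite shiftn0 /pre => ->. Qed.

Lemma count_ext s (HA : forall v, LS s v -> pre v s) (HB : forall n, LS s (pref s n)) n :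
  forall l : seq (seq bool), uniq l -> (forall v, v \in l -> size v = n /\ fac s v) ->
  exists l', [/\ uniq l', size l' = size l + (pref s n \in l) &
    forall v, v \in l' <-> (size v = n.+1 /\ fac s v /\ behead v \in l)].
Proof.
elim=> [|v l IH].
  by move=> _ _; exists [::]; split => // x; split => // [[_ []]].
case/andP => vnl ul Hl.
have Hl' : forall x, x \in l -> size x = n /\ fac s x.
  by move=> x xl; apply: Hl; rewrite in_cons xl orbT.
have [l1 [u1 s1 m1]] := IH ul Hl'.
have [sv fv] := Hl v (mem_head _ _).
have nin : forall c, (c :: v) \in l1 = false.
  by move=> c; apply/negbTE/negP => /m1 [_ [_ /= h]]; move: vnl; rewrite h.
case: (boolP (v == pref s n)) => [/eqP ev | nev].
  exists [:: false :: v, true :: v & l1]; split.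
  - by rewrite /= !inE !nin /= u1.
  - rewrite /= s1 !inE -ev eqxx /=.
    by rewrite (negbTE vnl) addn0 addn1.
  move=> x; rewrite !inE; split.
    case/orP => [/eqP ->|/orP [/eqP ->|xl1]].
    - by split; [rewrite /= sv | split; [rewrite ev; case: (HB n) | exact: mem_head]].
    - by split; [rewrite /= sv | split; [rewrite ev; case: (HB n) | exact: mem_head]].
    by case/m1: xl1 => [? [? h]]; split => //; split => //; rewrite ?in_cons h orbT.
  case: x => [|c y] [//= sy [fy]] /=.
  case/orP => [/eqP ->|yl]; first by case: (c); rewrite eqxx ?orbT.
  by rewrite (_ : (c :: y) \in l1) ?orbT //; apply/m1.
case: fv => [[|i] pv].
  by move: nev; rewrite {1}(fac0_pref pv) sv eqxx.
have fcv : fac s (s i :: v) by apply/fac_cons; exists i.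
exists ((s i :: v) :: l1); split.
- by rewrite /= nin u1.
- rewrite /= s1 in_cons (eq_sym (pref s n)) (negbTE nev) /=.
  by rewrite addSn.
move=> x; rewrite in_cons; split.
  case/orP => [/eqP ->|xl1]; first by split; [rewrite /= sv | split; [exact: fcv | exact: mem_head]].
  by case/m1: xl1 => [? [? h]]; split => //; split => //; rewrite ?in_cons h orbT.
case: x => [|c y] [//= sy [fy]] /=.
case/orP => [/eqP ey|yl]; last by rewrite (_ : (c :: y) \in l1) ?orbT //; apply/m1.
subst y; case: (boolP (c == s i)) => [/eqP -> //|nc]; first by rewrite eqxx.
have : LS s v by case: c fy nc fcv; case: (s i) => //= f1 _ f2; split.
move/HA => pv'; move: nev; rewrite /pre in pv'; by rewrite -sv pv' eqxx.
Qed.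


Definition cplx (x : nat -> bool) := forall n, exists l : seq (seq bool),
  uniq l /\ size l = n.+1 /\ (forall v, v \in l <-> (size v = n /\ fac x v)).

Lemma cplx_s s (HA : forall v, LS s v -> pre v s) (HB : forall n, LS s (pref s n)) : cplx s.
Proof.
elim=> [|n [l [ul [sl ml]]]].
  exists [:: [::]]; split => //; split => // v; rewrite inE; split.
    by move/eqP ->; split => //; exists 0.
  by case; case: v.
have pin : pref s n \in l by apply/ml; split; [exact: size_pref | exists 0; rewrite shiftn0; exact: pre_pref].
have [l' [u' s' m']] := count_ext HA HB ul (fun v vl => proj1 (ml v) vl).
exists l'; split => //; split; first by rewrite s' sl pin addn1.
move=> v; rewrite m'; split; first by case=> ? [? _].
case=> sv fv; split => //; split => //; apply/ml.
case: v sv fv => [//|c y] /= [sy] fy; split => //; exact: fac_behead fy.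
Qed.

Lemma cplx_sturmian x : cplx x -> sturmian x.
Proof.
move=> H n; have [l [ul [sl ml]]] := H n; exists l; split => //; split => // v.
rewrite ml; split.
  case=> sv [i pv]; exists i; rewrite -pv sv //.
case=> i ->; split; first exact: size_mkseq.
by exists i; rewrite /pre size_mkseq.
Qed.

Lemma cplx_ext x y : (forall v, fac x v <-> fac y v) -> cplx y -> cplx x.
Proof.
move=> e H n; have [l [ul [sl ml]]] := H n; exists l; split => //; split => // v.
by rewrite ml e.
Qed.

Lemma shift_consw c s i : shiftn i.+1 (consw c s) = shiftn i s.
Proof. by apply: functional_extensionality => k; rewrite /shiftn addSn. Qed.

Lemma fac_consw c s (HB : forall n, LS s (pref s n)) v : fac (consw c s) v <-> fac s v.
Proof.
split.
  case=> [[|i] pv]; last by exists i; rewrite shift_consw in pv.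
  case: v pv => [|c' v] pv; first by exists 0.
  case/pre_cons: pv => e pv; rewrite shiftnS shift_consw shiftn0 in pv.
  have -> : c' = c by rewrite -e.
  by case: (HB (size v)); rewrite pv; case: (c).
by case=> i pv; exists i.+1; rewrite shift_consw.
Qed.

Lemma std_sturm s (HA : forall v, LS s v -> pre v s) (HB : forall n, LS s (pref s n)) :
  standard_sturmian s.
Proof.
have C := cplx_s HA HB.
split; first exact: cplx_sturmian.
by split; apply: cplx_sturmian; apply: cplx_ext C => v; apply: fac_consw.
Qed.

Theorem sturm_main L g s : all in_b_beta (g :: L) -> has isb (g :: L) -> has isbeta (g :: L) ->
  isimg (phiw (g :: L)) s s -> standard_sturmian s.
Proof.
move=> bL hb hbeta H; apply: std_sturm.
  exact: LS_unique bL H.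
exact: LS_pref bL hb hbeta H.
Qed.


Definition allowed (c : bool) (g : gen) :=
  if c then (if g is Gb then false else true) else (if g is Gbeta then false else true).
Definition Gc (c : bool) := if c then Hg else Fg.

Lemma ab_id p : false :: mapw (phi Ga) p = mapw (phi Gb) p ++ [:: false].
Proof. by elim: p => // c p IH; rewrite !mapw_cons; case: c => /=; rewrite IH. Qed.

Lemma albe_id p : true :: mapw (phi Galpha) p = mapw (phi Gbeta) p ++ [:: true].
Proof. by elim: p => // c p IH; rewrite !mapw_cons; case: c => /=; rewrite IH. Qed.

Lemma conj1 c g p : allowed c g ->
  exists r, mapw (phi g) (c :: p) = c :: (mapw (phi (Gc c g)) p ++ r).
Proof.
rewrite mapw_cons; case: c; case: g => //= _.
- by exists [:: false]; rewrite ab_id.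
- by exists [::]; rewrite cats0.
- by exists [::]; rewrite cats0.
- by exists [::]; rewrite cats0.
- by exists [::]; rewrite cats0.
- by exists [:: true]; rewrite albe_id.
Qed.

Lemma conjw c w p : all (allowed c) w ->
  exists r, mapw (phiw w) (c :: p) = c :: (mapw (phiw (map (Gc c) w)) p ++ r).
Proof.
elim: w p => [|g w IH] p; first by exists [::]; rewrite !mapw_id cats0.
case/andP => ag aw; have [r e] := IH p aw.
rewrite mapw_phiw_cons e.
have [r1 e1] := conj1 (mapw (phiw (map (Gc c) w)) p ++ r) ag.
rewrite e1 mapw_cat -catA; exists (mapw (phi (Gc c g)) r ++ r1).
by rewrite /= mapw_phiw_cons.
Qed.

Lemma shift_eq (u : nat -> bool) : shift u = shiftn 1 u.
Proof. by apply: functional_extensionality. Qed.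

Lemma shift_fix w u c : isimg (phiw w) u u -> u 0 = c -> all (allowed c) w ->
  isimg (phiw (map (Gc c) w)) (shift u) (shift u).
Proof.
move=> H u0 aw n; have := H n.+1; rewrite pref_S u0 -shift_eq.
have [r ->] := conjw (pref (shift u) n) aw.
by case/pre_cons => _; rewrite -shift_eq => /pre_catl.
Qed.

Lemma hd_abeta w : all in_a_beta w ->
  phiw w false = [:: false] \/ exists r, phiw w false = true :: r.
Proof.
elim: w => [|g w IH]; first by left.
case/andP => ag /IH [e|[r e]] /=; rewrite e.
  by case: g ag => // _; [left | right; eexists].
by rewrite mapw_cons; case: g ag => // _; right; eexists.
Qed.

Lemma hd_balpha w : all in_b_alpha w ->
  phiw w true = [:: true] \/ exists r, phiw w true = false :: r.
Proof.
elim: w => [|g w IH]; first by left.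
case/andP => ag /IH [e|[r e]] /=; rewrite e.
  by case: g ag => // _; [right; eexists | left].
by rewrite mapw_cons; case: g ag => // _; right; eexists.
Qed.

Lemma mpow_fix f c k : f c = [:: c] -> mpow f k c = [:: c].
Proof.
move=> e; elim: k => // k IH.
by rewrite /mpow iterS -/(mpow f k) IH mapw_cons e.
Qed.

Lemma not_prim w c : phiw w c = [:: c] -> ~ primitive (phiw w).
Proof.
move=> e [k H]; have := H c (~~ c); rewrite (mpow_fix k e) inE.
by case: (c).
Qed.

Lemma all_fix c w : all (fun g => phi g c == [:: c]) w -> phiw w c = [:: c].
Proof.
elim: w => // g w IH /andP [/eqP e /IH] /= ->.
by rewrite mapw_cons e.
Qed.

Lemma need_both (p q : pred gen) c w :
  (forall g, p g -> ~~ q g -> phi g c == [:: c]) -> all p w -> ~~ has q w ->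
  phiw w c = [:: c].
Proof.
move=> K aw hw; apply: all_fix; elim: w aw hw => //= g w IH /andP [pg pw].
by rewrite negb_or => /andP [qg qw]; rewrite K //= IH.
Qed.

Lemma all_map (p p' : pred gen) f w : (forall g, p g -> p' (f g)) -> all p w -> all p' (map f w).
Proof. by move=> K; elim: w => //= g w IH /andP [pg pw]; rewrite K // IH. Qed.

Lemma has_map' (q q' : pred gen) f w : (forall g, q g -> q' (f g)) -> has q w -> has q' (map f w).
Proof. by move=> K; elim: w => //= g w IH /orP [qg|qw]; [rewrite K | rewrite IH ?orbT]. Qed.

Lemma sub_all' (p q : pred gen) w : (forall g, p g -> q g) -> all p w -> all q w.
Proof. by move=> K; elim: w => //= g w IH /andP [pg pw]; rewrite K // IH. Qed.

Definition isa (g : gen) := if g is Ga then true else false.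
Definition isalpha (g : gen) := if g is Galpha then true else false.

Lemma sturm_of L s : all in_b_beta L -> has isb L -> has isbeta L ->
  isimg (phiw L) s s -> standard_sturmian s.
Proof. by case: L => // g L; exact: sturm_main. Qed.

Lemma nn (b : bool) : ~ ~ b -> b.
Proof. by case: b => // h; exfalso; apply: h. Qed.

Lemma al1 g : in_a_beta g -> allowed true g. Proof. by case: g. Qed.
Lemma al2 g : in_b_alpha g -> allowed false g. Proof. by case: g. Qed.
Lemma al3 g : in_a_alpha g -> allowed true g. Proof. by case: g. Qed.
Lemma al4 g : in_a_alpha g -> allowed false g. Proof. by case: g. Qed.

Unset Implicit Arguments.

Theorem lemma26 (w : seq gen) (u : nat -> bool) :
  primitive (phiw w) -> substitution (phiw w) -> fixed_by (phiw w) u ->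
  [/\ (all in_a_beta w ->
         standard_sturmian (shift u) /\ fixed_by (phiw (Hw w)) (shift u)),
      (all in_b_alpha w ->
         standard_sturmian (shift u) /\ fixed_by (phiw (Fw w)) (shift u)),
      (all in_a_alpha w -> u 0 = true -> fixed_by (phiw (Hw w)) (shift u))
    & (all in_a_alpha w -> u 0 = false -> fixed_by (phiw (Fw w)) (shift u))].
Proof.
move=> prim _ hfix.
have Hu := fixed_isimg (ne_phiw w) hfix.
have u0 := isimg_head Hu.
split.
- move=> aw.
  have ut : u 0 = true.
    move: u0; case E: (u 0) => // u0.
    case: (hd_abeta aw) => [e|[r e]]; first by case: (not_prim e prim).
    by move: u0; rewrite e => /pre_cons []; rewrite E.
  have Hs := shift_fix Hu ut (sub_all' (p := in_a_beta) al1 aw).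
  split; last exact: isimg_fixed (ne_phiw _) Hs.
  apply: sturm_of Hs.
  + by apply: (all_map (p := in_a_beta)) aw; case.
  + apply: (has_map' (q := isa)) => [|]; first by case.
    apply: nn => h; apply: (not_prim _ prim).
    apply: (need_both (p := in_a_beta) (q := isa) (c := true) _ aw) => [g|]; [by case: g | by apply/negP].
  + apply: (has_map' (q := isbeta)) => [|]; first by case.
    apply: nn => h; apply: (not_prim _ prim).
    apply: (need_both (p := in_a_beta) (q := isbeta) (c := false) _ aw) => [g|]; [by case: g | by apply/negP].
- move=> aw.
  have uf : u 0 = false.
    move: u0; case E: (u 0) => // u0.
    case: (hd_balpha aw) => [e|[r e]]; first by case: (not_prim e prim).
    by move: u0; rewrite e => /pre_cons []; rewrite E.
  have Hs := shift_fix Hu uf (sub_all' (p := in_b_alpha) al2 aw).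
  split; last exact: isimg_fixed (ne_phiw _) Hs.
  apply: sturm_of Hs.
  + by apply: (all_map (p := in_b_alpha)) aw; case.
  + apply: (has_map' (q := isb)) => [|]; first by case.
    apply: nn => h; apply: (not_prim _ prim).
    apply: (need_both (p := in_b_alpha) (q := isb) (c := true) _ aw) => [g|]; [by case: g | by apply/negP].
  + apply: (has_map' (q := isalpha)) => [|]; first by case.
    apply: nn => h; apply: (not_prim _ prim).
    apply: (need_both (p := in_b_alpha) (q := isalpha) (c := false) _ aw) => [g|]; [by case: g | by apply/negP].
- move=> aw ut.
  have Hs := shift_fix Hu ut (sub_all' (p := in_a_alpha) al3 aw).
  exact: isimg_fixed (ne_phiw _) Hs.
- move=> aw uf.
  have Hs := shift_fix Hu uf (sub_all' (p := in_a_alpha) al4 aw).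
  exact: isimg_fixed (ne_phiw _) Hs.
Qed.
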